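(* Consider the ideal MHD system in Eulerian Clebsch variables with dependent variables $z=(z^1,\dots,z^{15})=(u^1,u^2,u^3,\rho,S,\mu,B^1,B^2,B^3,\Gamma^1,\Gamma^2,\Gamma^3,\lambda,\beta,\phi)$, functions of $(x^0,x^1,x^2,x^3)=(t,x,y,z)$, and let $\varepsilon(\rho,S)$ be a smooth internal energy density and $\mu_0>0$ a constant. Define the one-forms on $z$-space $$\omega^0=\phi\,d\rho+\beta\,dS+\lambda\,d\mu+\Gamma_s\,dB^s,$$ $$\omega^i=u^i(\beta\,dS+\lambda\,d\mu+\phi\,d\rho)+\rho\phi\,du^i+(\Gamma_sB^s)\,du^i-B^i\,\Gamma_s\,du^s+u^i\,\Gamma_s\,dB^s\quad(i=1,2,3),$$ and write $\omega^\alpha=L^\alpha_j(z)\,dz^j$. Let $H(z)=-\left(\tfrac12\rho u^2-\varepsilon(\rho,S)-\tfrac{B^2}{2\mu_0}\right)$ and $\mathsf{K}^\alpha_{ij}=\partial L^\alpha_j/\partial z^i-\partial L^\alpha_i/\partial z^j$. Let $dV=dt\wedge dx\wedge dy\wedge dz$, $d\tilde{x}_\alpha=\partial_{x^\alpha}\lrcorner dV=(-1)^\alpha dx^0\wedge\cdots\wedge\widehat{dx^\alpha}\wedge\cdots\wedge dx^3$, and define the 4-form on $(x,z)$-space $$\Theta=\omega^\alpha\wedge d\tilde{x}_\alpha-H\,dV.$$ For a section $\psi: x\mapsto (x,z(x))$, the pullback satisfies $\psi^*(\Theta)=L\,dV$, where $L=L^\alpha_j(z)\,\partial z^j/\partial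 x^\alpha-H(z)$ is the constrained Lagrangian $$L=\tfrac12\rho u^2-\varepsilon(\rho,S)-\tfrac{B^2}{2\mu_0}+\phi\big(\rho_t+\nabla\cdot(\rho\mathbf{u})\big)+\beta\big(S_t+\mathbf{u}\cdot\nabla S\big)+\lambda\big(\mu_t+\mathbf{u}\cdot\nabla\mu\big)+\boldsymbol{\Gamma}\cdot\big(\mathbf{B}_t-\nabla\times(\mathbf{u}\times\mathbf{B})+\mathbf{u}(\nabla\cdot\mathbf{B})\big).$$ Moreover, the stationary point conditions $\delta J/\delta z^i=0$ of the action $J=\int\psi^*(\Theta)=\int L\,dV$ are $$\frac{\partial L}{\partial z^i}-\frac{\partial}{\partial x^\alpha}\left(\frac{\partial L}{\partial z^i_{,\alpha}}\right)=\mathsf{K}^\alpha_{ij}\frac{\partial z^j}{\partial x^\alpha}-\frac{\partial H}{\partial z^i}=0,\quad i=1,\dots,15,$$ i.e. the multi-symplectic system $\mathsf{K}^\alpha_{ij}\,\partial z^j/\partial x^\alpha=\partial H/\partial z^i$ is the set of stationary point conditions of $J$.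
   Context: Summation is over repeated indices: $\alpha=0,\dots,3$, $j=1,\dots,15$, $s=1,2,3$. Here $\rho$ is density, $\mathbf{u}$ velocity, $S$ entropy, $\mu$ a Lin constraint variable, $\mathbf{B}$ magnetic field, and $\phi,\beta,\lambda,\boldsymbol{\Gamma}$ are Lagrange multipliers (Clebsch potentials); $z^j_{,\alpha}=\partial z^j/\partial x^\alpha$, $u^2=|\mathbf{u}|^2$, $B^2=|\mathbf{B}|^2$, $\Gamma_s=\Gamma^s$. *)

(* Defs.v *)
From Stdlib Require Import Reals.
From Coquelicot Require Import Coquelicot.
Open Scope R_scope.

Fixpoint rsum (n : nat) (f : nat -> R) : R :=
  match n with O => 0 | S m => rsum m f + f m end.

(* points of R^n are represented as nat -> R (only the first n coords matter) *)
Definition upd (p : nat -> R) (k : nat) (t : R) : nat -> R :=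
  fun n => if Nat.eqb n k then t else p n.

Definition pderiv (f : (nat -> R) -> R) (p : nat -> R) (k : nat) : R :=
  Derive (fun t => f (upd p k t)) (p k).

Definition ebasis (k : nat) : nat -> R := fun n => if Nat.eqb n k then 1 else 0.

Fixpoint detn (n : nat) (M : nat -> nat -> R) : R :=
  match n with
  | O => 1
  | S m => rsum (S m) (fun k =>
      (-1) ^ k * M O k * detn m (fun i j => M (S i) (if Nat.ltb j k then j else S j)))
  end.

(* ---------- indexing of the dependent variables z^1..z^15 (0-based) ----------
   z = (u1,u2,u3, rho, S, mu, B1,B2,B3, G1,G2,G3, lambda, beta, phi)
   index:  0  1  2   3   4   5   6  7  8   9 10 11     12     13   14 *)
Definition iu (k : nat) : nat := (k - 1)%nat.   (* k = 1,2,3 *)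
Definition irho : nat := 3.
Definition iS : nat := 4.
Definition imu : nat := 5.
Definition iB (k : nat) : nat := (5 + k)%nat.   (* k = 1,2,3 *)
Definition iG (k : nat) : nat := (8 + k)%nat.   (* k = 1,2,3 *)
Definition ilam : nat := 12.
Definition ibeta : nat := 13.
Definition iphi : nat := 14.

Definition sum3 (f : nat -> R) : R := f 1%nat + f 2%nat + f 3%nat.

(* ---------- the one-forms omega^alpha on z-space ----------
   omegaz a z dz = omega^a at the point z, applied to the z-space vector dz *)
Definition omegaz (a : nat) (z dz : nat -> R) : R :=
  match a with
  | O => z iphi * dz irho + z ibeta * dz iS + z ilam * dz imu
         + sum3 (fun s => z (iG s) * dz (iB s))
  | S i' =>
    let i := S i' in
    if Nat.leb i 3 then
      z (iu i) * (z ibeta * dz iS + z ilam * dz imu + z iphi * dz irho)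
      + z irho * z iphi * dz (iu i)
      + sum3 (fun s => z (iG s) * z (iB s)) * dz (iu i)
      - z (iB i) * sum3 (fun s => z (iG s) * dz (iu s))
      + z (iu i) * sum3 (fun s => z (iG s) * dz (iB s))
    else 0
  end.

Definition Lcoef (a j : nat) (z : nat -> R) : R := omegaz a z (ebasis j).

Definition Hfun (eps : R -> R -> R) (mu0 : R) (z : nat -> R) : R :=
  - (1/2 * z irho * sum3 (fun s => z (iu s) ^ 2) - eps (z irho) (z iS)
     - sum3 (fun s => z (iB s) ^ 2) / (2 * mu0)).

Definition Kfun (a i j : nat) (z : nat -> R) : R :=
  pderiv (Lcoef a j) z i - pderiv (Lcoef a i) z j.

(* ---------- forms on (x,z)-space ----------
   A tangent vector v of (x,z)-space is nat -> R with v 0..3 the x-components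
   and v (4+j) the component along z^j (j = 0..14). *)
Definition zpart (v : nat -> R) : nat -> R := fun j => v (4 + j)%nat.

Definition dV (v0 v1 v2 v3 : nat -> R) : R :=
  detn 4 (fun i j => (match i with O => v0 | 1%nat => v1 | 2%nat => v2 | _ => v3 end) j).

Definition dxt (a : nat) (w1 w2 w3 : nat -> R) : R := dV (ebasis a) w1 w2 w3.

Definition wedge13 (w : (nat -> R) -> R) (eta : (nat -> R) -> (nat -> R) -> (nat -> R) -> R)
  (v0 v1 v2 v3 : nat -> R) : R :=
  w v0 * eta v1 v2 v3 - w v1 * eta v0 v2 v3 + w v2 * eta v0 v1 v3 - w v3 * eta v0 v1 v2.

Definition Theta (eps : R -> R -> R) (mu0 : R) (z : nat -> R) (v0 v1 v2 v3 : nat -> R) : R :=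
  rsum 4 (fun a => wedge13 (fun v => omegaz a z (zpart v)) (dxt a) v0 v1 v2 v3)
  - Hfun eps mu0 z * dV v0 v1 v2 v3.

(* ---------- sections psi : x |-> (x, z(x)) ----------
   zf : (nat -> R) -> (nat -> R), x = (x^0,..,x^3) = (t,x,y,z) *)
Definition jet (zf : (nat -> R) -> nat -> R) (x : nat -> R) (a j : nat) : R :=
  pderiv (fun y => zf y j) x a.

Definition dpsi (zf : (nat -> R) -> nat -> R) (x : nat -> R) (b : nat) : nat -> R :=
  fun n => if Nat.ltb n 4 then ebasis b n else jet zf x b (n - 4)%nat.

(* coefficient of dV in psi^* Theta : psi^*Theta = (pullTheta x) dV *)
Definition pullTheta (eps : R -> R -> R) (mu0 : R) (zf : (nat -> R) -> nat -> R) (x : nat -> R) : R :=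
  Theta eps mu0 (zf x) (dpsi zf x 0) (dpsi zf x 1) (dpsi zf x 2) (dpsi zf x 3).

(* Lagrangian as a function of (z, p), p a j standing for z^j_{,a}:
   L = L^a_j(z) p^j_a - H(z) *)
Definition Lden (eps : R -> R -> R) (mu0 : R) (z : nat -> R) (p : nat -> nat -> R) : R :=
  rsum 4 (fun a => rsum 15 (fun j => Lcoef a j z * p a j)) - Hfun eps mu0 z.

Definition curl (d : nat -> ((nat -> R) -> R) -> R) (F : nat -> (nat -> R) -> R) (k : nat) : R :=
  match k with
  | 1%nat => d 2%nat (F 3%nat) - d 3%nat (F 2%nat)
  | 2%nat => d 3%nat (F 1%nat) - d 1%nat (F 3%nat)
  | 3%nat => d 1%nat (F 2%nat) - d 2%nat (F 1%nat)
  | _ => 0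
  end.

Definition crossF (A B : nat -> (nat -> R) -> R) (k : nat) : (nat -> R) -> R :=
  fun y => match k with
  | 1%nat => A 2%nat y * B 3%nat y - A 3%nat y * B 2%nat y
  | 2%nat => A 3%nat y * B 1%nat y - A 1%nat y * B 3%nat y
  | 3%nat => A 1%nat y * B 2%nat y - A 2%nat y * B 1%nat y
  | _ => 0
  end.

Definition Lagr (eps : R -> R -> R) (mu0 : R) (zf : (nat -> R) -> nat -> R) (x : nat -> R) : R :=
  let f (j : nat) : (nat -> R) -> R := fun y => zf y j in
  let d (k : nat) (g : (nat -> R) -> R) : R := pderiv g x k in
  let uF (k : nat) := f (iu k) in
  let BF (k : nat) := f (iB k) in
  let z := zf x in
  1/2 * z irho * sum3 (fun s => z (iu s) ^ 2) - eps (z irho) (z iS)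
  - sum3 (fun s => z (iB s) ^ 2) / (2 * mu0)
  + z iphi * (d 0%nat (f irho) + sum3 (fun k => d k (fun y => f irho y * uF k y)))
  + z ibeta * (d 0%nat (f iS) + sum3 (fun k => z (iu k) * d k (f iS)))
  + z ilam * (d 0%nat (f imu) + sum3 (fun k => z (iu k) * d k (f imu)))
  + sum3 (fun s => z (iG s) *
      (d 0%nat (BF s) - curl d (crossF uF BF) s
       + z (iu s) * sum3 (fun k => d k (BF k)))).

Definition upd2 (p : nat -> nat -> R) (a j : nat) (t : R) : nat -> nat -> R :=
  fun b k => if andb (Nat.eqb b a) (Nat.eqb k j) then t else p b k.

Definition dL_dp (eps : R -> R -> R) (mu0 : R) (z : nat -> R) (p : nat -> nat -> R) (i a : nat) : R :=
  Derive (fun t => Lden eps mu0 z (upd2 p a i t)) (p a i).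

Definition EL (eps : R -> R -> R) (mu0 : R) (zf : (nat -> R) -> nat -> R) (i : nat) (x : nat -> R) : R :=
  pderiv (fun z' => Lden eps mu0 z' (jet zf x)) (zf x) i
  - rsum 4 (fun a => pderiv (fun y => dL_dp eps mu0 (zf y) (jet zf y) i a) x a).

(* Main.v *)
Require Import Defs.
From Stdlib Require Import Reals Lia Lra FunctionalExtensionality.
From Coquelicot Require Import Coquelicot.
Open Scope R_scope.

Lemma isd_mult f g x a b : is_derive f x a -> is_derive g x b -> is_derive (fun t => f t * g t) x (a * g x + f x * b).
Proof. intros Ha Hb. apply (is_derive_mult f g x a b Ha Hb). intros; apply Rmult_comm. Qed.
Lemma isd_plus f g x a b : is_derive f x a -> is_derive g x b -> is_derive (fun t => f t + g t) x (a + b).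
Proof. intros Ha Hb. apply (is_derive_plus f g x a b Ha Hb). Qed.
Lemma isd_minus f g x a b : is_derive f x a -> is_derive g x b -> is_derive (fun t => f t - g t) x (a - b).
Proof. intros Ha Hb. apply (is_derive_minus f g x a b Ha Hb). Qed.
Lemma isd_opp f x a : is_derive f x a -> is_derive (fun t => - f t) x (- a).
Proof. intros Ha. apply (is_derive_opp f x a Ha). Qed.
Lemma isd_const (c x : R) : is_derive (fun _ => c) x 0.
Proof. apply (is_derive_const c x). Qed.
Lemma isd_id (x : R) : is_derive (fun t => t) x 1.
Proof. apply (is_derive_id x). Qed.

Lemma rsum_ext n f g : (forall k, (k < n)%nat -> f k = g k) -> rsum n f = rsum n g.
Proof. induction n; simpl; intros H; auto. rewrite IHn by (intros; apply H; lia). rewrite H by lia. auto. Qed.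
Lemma rsum_plus n f g : rsum n (fun k => f k + g k) = rsum n f + rsum n g.
Proof. induction n; simpl; [ring|rewrite IHn; ring]. Qed.
Lemma rsum_minus n f g : rsum n (fun k => f k - g k) = rsum n f - rsum n g.
Proof. induction n; simpl; [ring|rewrite IHn; ring]. Qed.
Lemma rsum_scal n c f : rsum n (fun k => c * f k) = c * rsum n f.
Proof. induction n; simpl; [ring|rewrite IHn; ring]. Qed.
Lemma rsum_zero n : rsum n (fun _ => 0) = 0.
Proof. induction n; simpl; [ring|rewrite IHn; ring]. Qed.
Lemma rsum_delta n j f : (j < n)%nat -> rsum n (fun k => f k * (if Nat.eqb k j then 1 else 0)) = f j.
Proof.
  induction n; intros H; [lia|]. simpl.
  destruct (Nat.eqb_spec n j).
  - subst. rewrite (rsum_ext _ _ (fun _ => 0)). rewrite rsum_zero; ring.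
    intros k Hk. destruct (Nat.eqb_spec k j); [lia|ring].
  - rewrite IHn by lia. ring.
Qed.
Lemma isd_rsum n (F : nat -> R -> R) d t : (forall k, (k < n)%nat -> is_derive (F k) t (d k)) ->
  is_derive (fun s => rsum n (fun k => F k s)) t (rsum n d).
Proof.
  induction n; intros H; simpl. apply isd_const.
  apply isd_plus. apply IHn; intros; apply H; lia. apply H; lia.
Qed.

Lemma upd_same z j : upd z j (z j) = z.
Proof. apply functional_extensionality; intros n; unfold upd. destruct (Nat.eqb_spec n j); subst; auto. Qed.

Lemma isd_upd z j k t : is_derive (fun s => upd z j s k) t (if Nat.eqb k j then 1 else 0).
Proof. unfold upd. destruct (Nat.eqb k j). apply isd_id. apply isd_const. Qed.

Definition Cdw (f : (nat -> R) -> R) (Df : nat -> (nat -> R) -> R) : Prop :=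
  forall (c : R -> nat -> R) t0, (forall j, (j < 15)%nat -> ex_derive (fun t => c t j) t0) ->
  is_derive (fun t => f (c t)) t0 (rsum 15 (fun j => Df j (c t0) * Derive (fun t => c t j) t0)).
Definition Cd f := Cdw f (fun j z => pderiv f z j).

Lemma Cdw_pderiv f Df z j : Cdw f Df -> (j < 15)%nat -> pderiv f z j = Df j z.
Proof.
  intros H Hj. specialize (H (upd z j) (z j)).
  assert (Hc : forall k, (k < 15)%nat -> ex_derive (fun t => upd z j t k) (z j)).
  { intros k _. eexists. apply isd_upd. }
  specialize (H Hc). rewrite upd_same in H.
  unfold pderiv. apply is_derive_unique in H. etransitivity; [exact H|].
  rewrite (rsum_ext _ _ (fun k => Df k z * (if Nat.eqb k j then 1 else 0))).
  apply rsum_delta; auto.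
  intros k _. f_equal. apply is_derive_unique, isd_upd.
Qed.

Lemma Cdw_Cd f Df : Cdw f Df -> Cd f.
Proof.
  intros H c t0 Hc. pose proof (H c t0 Hc) as H1.
  replace (rsum 15 (fun j => pderiv f (c t0) j * Derive (fun t => c t j) t0))
    with (rsum 15 (fun j => Df j (c t0) * Derive (fun t => c t j) t0)). exact H1.
  apply rsum_ext. intros k Hk. rewrite (Cdw_pderiv f Df); auto.
Qed.

Lemma Cd_exd f z i : Cd f -> (i < 15)%nat -> ex_derive (fun t => f (upd z i t)) (z i).
Proof. intros H Hi. eexists. apply H. intros k _. eexists. apply isd_upd. Qed.

Lemma Cd_const c : Cd (fun _ => c).
Proof. apply (Cdw_Cd _ (fun _ _ => 0)). intros cc t0 _. rewrite (rsum_ext _ _ (fun _ => 0)).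
  rewrite rsum_zero. apply isd_const. intros; ring. Qed.

Lemma Cd_proj k : (k < 15)%nat -> Cd (fun z => z k).
Proof. intros Hk. apply (Cdw_Cd _ (fun j _ => if Nat.eqb j k then 1 else 0)). intros c t0 Hc.
  rewrite (rsum_ext _ _ (fun j => Derive (fun t => c t j) t0 * (if Nat.eqb j k then 1 else 0))).
  rewrite rsum_delta by auto. apply Derive_correct. auto. intros; ring. Qed.

Lemma Cd_plus f g : Cd f -> Cd g -> Cd (fun z => f z + g z).
Proof. intros Hf Hg. apply (Cdw_Cd _ (fun j z => pderiv f z j + pderiv g z j)). intros c t0 Hc.
  rewrite (rsum_ext _ _ (fun j => pderiv f (c t0) j * Derive (fun t => c t j) t0 + pderiv g (c t0) j * Derive (fun t => c t j) t0)) by (intros; ring).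
  rewrite rsum_plus. apply isd_plus; auto. Qed.

Lemma Cd_minus f g : Cd f -> Cd g -> Cd (fun z => f z - g z).
Proof. intros Hf Hg. apply (Cdw_Cd _ (fun j z => pderiv f z j - pderiv g z j)). intros c t0 Hc.
  rewrite (rsum_ext _ _ (fun j => pderiv f (c t0) j * Derive (fun t => c t j) t0 - pderiv g (c t0) j * Derive (fun t => c t j) t0)) by (intros; ring).
  rewrite rsum_minus. apply isd_minus; auto. Qed.

Lemma Cd_opp f : Cd f -> Cd (fun z => - f z).
Proof. intros Hf. apply (Cdw_Cd _ (fun j z => - pderiv f z j)). intros c t0 Hc.
  rewrite (rsum_ext _ _ (fun j => (-1) * (pderiv f (c t0) j * Derive (fun t => c t j) t0))) by (intros; ring).
  rewrite rsum_scal. replace ((-1) * _) with (- rsum 15 (fun j => pderiv f (c t0) j * Derive (fun t => c t j) t0)) by ring.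
  apply isd_opp; auto. Qed.

Lemma Cd_mult f g : Cd f -> Cd g -> Cd (fun z => f z * g z).
Proof. intros Hf Hg. apply (Cdw_Cd _ (fun j z => pderiv f z j * g z + f z * pderiv g z j)). intros c t0 Hc.
  rewrite (rsum_ext _ _ (fun j => g (c t0) * (pderiv f (c t0) j * Derive (fun t => c t j) t0) + f (c t0) * (pderiv g (c t0) j * Derive (fun t => c t j) t0))) by (intros; ring).
  rewrite rsum_plus, !rsum_scal.
  replace (g (c t0) * _ + _) with (rsum 15 (fun j => pderiv f (c t0) j * Derive (fun t => c t j) t0) * g (c t0) + f (c t0) * rsum 15 (fun j => pderiv g (c t0) j * Derive (fun t => c t j) t0)) by ring.
  apply isd_mult; auto. Qed.

Lemma Cd_ext f g : (forall z, f z = g z) -> Cd f -> Cd g.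
Proof. intros H. replace g with f; auto. apply functional_extensionality; auto. Qed.

Lemma Cd_divc f c : Cd f -> Cd (fun z => f z / c).
Proof. intros Hf. apply (Cd_ext (fun z => f z * / c)). intros; reflexivity. apply Cd_mult; auto. apply Cd_const. Qed.

Lemma Cd_pow2 f : Cd f -> Cd (fun z => f z ^ 2).
Proof. intros Hf. apply (Cd_ext (fun z => f z * f z)). intros; ring. apply Cd_mult; auto. Qed.

Lemma Cd_rsum n (F : nat -> (nat -> R) -> R) : (forall k, (k < n)%nat -> Cd (F k)) -> Cd (fun z => rsum n (fun k => F k z)).
Proof. induction n; intros H; simpl. apply Cd_const. apply (Cd_plus (fun z => rsum n (fun k => F k z)) (F n)).
  apply IHn; intros; apply H; lia. apply H; lia. Qed.

Ltac cdstep := match goal with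
  | |- Cd (fun _ => ?c) => apply Cd_const
  | |- Cd (fun z => _ + _) => apply Cd_plus
  | |- Cd (fun z => _ - _) => apply Cd_minus
  | |- Cd (fun z => - _) => apply Cd_opp
  | |- Cd (fun z => _ * _) => apply Cd_mult
  | |- Cd (fun z => _ / _) => apply Cd_divc
  | |- Cd (fun z => _ ^ 2) => apply Cd_pow2
  | |- Cd (fun z => z _) => apply Cd_proj; unfold iu, iB, iG, irho, iS, imu, ilam, ibeta, iphi; lia
  end.
Ltac cdsolve := repeat cdstep.

Lemma Cd_omega a w : (a < 4)%nat -> Cd (fun z => omegaz a z w).
Proof. intros Ha. destruct a as [|[|[|[|a]]]]; try lia; unfold omegaz, sum3; cbn [Nat.leb]; cdsolve. Qed.

Lemma exd_plus (f g : R -> R) x : ex_derive f x -> ex_derive g x -> ex_derive (fun t => f t + g t) x.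
Proof. intros [a Ha] [b Hb]. exists (a + b). apply isd_plus; auto. Qed.

Definition HQ (mu0 : R) (z : nat -> R) : R :=
  - (1/2 * z irho * sum3 (fun s => z (iu s) ^ 2) - sum3 (fun s => z (iB s) ^ 2) / (2 * mu0)).
Lemma Hfun_split eps mu0 z : Hfun eps mu0 z = HQ mu0 z + eps (z irho) (z iS).
Proof. unfold Hfun, HQ. ring. Qed.
Lemma Cd_HQ mu0 : Cd (HQ mu0).
Proof. unfold HQ, sum3. cdsolve. Qed.

Lemma exd_H eps mu0 z i :
  (forall r s, ex_derive (fun t => eps t s) r /\ ex_derive (fun t => eps r t) s) ->
  (i < 15)%nat -> ex_derive (fun t => Hfun eps mu0 (upd z i t)) (z i).
Proof.
  intros He Hi.
  apply ex_derive_ext with (fun t => HQ mu0 (upd z i t) + eps (upd z i t irho) (upd z i t iS)).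
  { intros; symmetry; apply Hfun_split. }
  apply (exd_plus (fun t => HQ mu0 (upd z i t)) (fun t => eps (upd z i t irho) (upd z i t iS))).
  apply (Cd_exd (HQ mu0)); auto. apply Cd_HQ.
  unfold upd, irho, iS.
  destruct (Nat.eqb_spec 3 i); destruct (Nat.eqb_spec 4 i); subst; try lia; simpl.
  - exact (proj1 (He (z 3%nat) (z 4%nat))).
  - exact (proj2 (He (z 3%nat) (z 4%nat))).
  - eexists; apply isd_const.
Qed.

Lemma isd_cmul_if (c d x : R) (b : bool) : is_derive (fun t => c * (if b then t else d)) x (c * if b then 1 else 0).
Proof. destruct b.
  - replace (c * 1) with (0 * x + c * 1) by ring. apply isd_mult. apply isd_const. apply isd_id.
  - replace (c * 0) with (0 * d + c * 0) by ring. apply isd_mult; apply isd_const.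
Qed.

Lemma dLdp eps mu0 z p i a : (a < 4)%nat -> (i < 15)%nat -> dL_dp eps mu0 z p i a = Lcoef a i z.
Proof.
  intros Ha Hi. unfold dL_dp. apply is_derive_unique. unfold Lden.
  replace (Lcoef a i z) with
    (rsum 4 (fun b => rsum 15 (fun k => Lcoef b k z * (if andb (Nat.eqb b a) (Nat.eqb k i) then 1 else 0))) - 0).
  - apply isd_minus; [|apply isd_const].
    apply isd_rsum; intros b Hb. apply isd_rsum; intros k Hk. unfold upd2. apply isd_cmul_if.
  - rewrite (rsum_ext _ _ (fun b => Lcoef b i z * (if Nat.eqb b a then 1 else 0))).
    + rewrite (rsum_delta 4 a (fun b => Lcoef b i z)) by auto. ring.
    + intros b Hb. destruct (Nat.eqb b a); cbn [andb].
      * rewrite (rsum_delta 15 i (fun k => Lcoef b k z)) by auto. ring.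
      * rewrite (rsum_ext _ _ (fun _ => 0)). rewrite rsum_zero; ring. intros; ring.
Qed.

Lemma Cd_Lcoef a i : (a < 4)%nat -> Cd (Lcoef a i).
Proof. intros; unfold Lcoef; apply Cd_omega; auto. Qed.

Lemma pderiv_rsum n (F : nat -> (nat -> R) -> R) z i : (forall k, (k < n)%nat -> Cd (F k)) -> (i < 15)%nat ->
  pderiv (fun z => rsum n (fun k => F k z)) z i = rsum n (fun k => pderiv (F k) z i).
Proof.
  induction n; intros H Hi; unfold pderiv in *; simpl.
  - apply is_derive_unique, isd_const.
  - rewrite Derive_plus. rewrite IHn; auto.
    + exact (Cd_exd (fun z => rsum n (fun k => F k z)) z i (Cd_rsum n F (fun k Hk => H k ltac:(lia))) Hi).
    + exact (Cd_exd (F n) z i (H n ltac:(lia)) Hi).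
Qed.

Lemma EL_part2 eps mu0 zf x i a :
  (forall x a j, (a < 4)%nat -> (j < 15)%nat -> ex_derive (fun t => zf (upd x a t) j) (x a)) ->
  (a < 4)%nat -> (i < 15)%nat ->
  pderiv (fun y => dL_dp eps mu0 (zf y) (jet zf y) i a) x a
  = rsum 15 (fun j => pderiv (Lcoef a i) (zf x) j * jet zf x a j).
Proof.
  intros Hz Ha Hi. unfold pderiv at 1.
  rewrite (Derive_ext _ (fun t => Lcoef a i (zf (upd x a t)))) by (intros; apply dLdp; auto).
  apply is_derive_unique.
  pose proof (Cd_Lcoef a i Ha (fun t => zf (upd x a t)) (x a)) as H.
  unfold Cd, Cdw in H; cbv beta in H. rewrite upd_same in H. apply H. intros j Hj. apply Hz; auto.
Qed.

Lemma EL_formula eps mu0 zf x i :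
  (forall r s, ex_derive (fun t => eps t s) r /\ ex_derive (fun t => eps r t) s) ->
  (forall x a j, (a < 4)%nat -> (j < 15)%nat -> ex_derive (fun t => zf (upd x a t) j) (x a)) ->
  (i < 15)%nat ->
  EL eps mu0 zf i x
  = rsum 4 (fun a => rsum 15 (fun j => Kfun a i j (zf x) * jet zf x a j))
    - pderiv (Hfun eps mu0) (zf x) i.
Proof.
  intros He Hz Hi. unfold EL.
  rewrite (rsum_ext 4 _ (fun a => rsum 15 (fun j => pderiv (Lcoef a i) (zf x) j * jet zf x a j)))
    by (intros; apply EL_part2; auto).
  set (z := zf x). set (p := jet zf x).
  assert (HLL : Cd (fun z' => rsum 4 (fun a => rsum 15 (fun j => Lcoef a j z' * p a j)))).
  { apply (Cd_rsum 4 (fun a z' => rsum 15 (fun j => Lcoef a j z' * p a j))). intros a Ha.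
    apply (Cd_rsum 15 (fun j z' => Lcoef a j z' * p a j)). intros j Hj.
    apply Cd_mult. apply Cd_Lcoef; auto. apply Cd_const. }
  assert (E1 : pderiv (fun z' => Lden eps mu0 z' p) z i
     = pderiv (fun z' => rsum 4 (fun a => rsum 15 (fun j => Lcoef a j z' * p a j))) z i
       - pderiv (Hfun eps mu0) z i).
  { unfold pderiv, Lden. rewrite Derive_minus. reflexivity.
    exact (Cd_exd _ z i HLL Hi). apply exd_H; auto. }
  rewrite E1.
  rewrite (pderiv_rsum 4 (fun a z' => rsum 15 (fun j => Lcoef a j z' * p a j))); auto.
  2:{ intros a Ha. apply (Cd_rsum 15 (fun j z' => Lcoef a j z' * p a j)). intros j Hj.
    apply Cd_mult. apply Cd_Lcoef; auto. apply Cd_const. }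
  rewrite (rsum_ext 4 _ (fun a => rsum 15 (fun j => pderiv (Lcoef a j) z i * p a j))).
  2:{ intros a Ha. rewrite (pderiv_rsum 15 (fun j z' => Lcoef a j z' * p a j)); auto.
      apply rsum_ext. intros j Hj. unfold pderiv. apply Derive_scal_l.
      intros j Hj. apply Cd_mult. apply Cd_Lcoef; auto. apply Cd_const. }
  rewrite (rsum_ext 4 (fun a => rsum 15 (fun j => Kfun a i j z * p a j))
     (fun a => rsum 15 (fun j => pderiv (Lcoef a j) z i * p a j) - rsum 15 (fun j => pderiv (Lcoef a i) z j * p a j))).
  2:{ intros a Ha. rewrite <- rsum_minus. apply rsum_ext. intros j Hj. unfold Kfun. ring. }
  rewrite rsum_minus. ring.
Qed.

Lemma omega_lin a z w : (a < 4)%nat -> omegaz a z w = rsum 15 (fun j => Lcoef a j z * w j).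
Proof. intros Ha. unfold Lcoef.
  destruct a as [|[|[|[|a]]]]; try lia; unfold omegaz, ebasis, sum3, iu, iB, iG, irho, iS, imu, ilam, ibeta, iphi;
  cbn [rsum Nat.leb Nat.eqb Nat.sub Nat.add]; ring. Qed.

Lemma dV_id zf x : dV (dpsi zf x 0) (dpsi zf x 1) (dpsi zf x 2) (dpsi zf x 3) = 1.
Proof. unfold dV, dpsi, ebasis. cbn [detn rsum Nat.ltb Nat.leb Nat.eqb]. ring. Qed.

Lemma Theta_eval eps mu0 z (V : nat -> nat -> R) :
  (forall b n, (b < 4)%nat -> (n < 4)%nat -> V b n = ebasis b n) ->
  Theta eps mu0 z (V 0%nat) (V 1%nat) (V 2%nat) (V 3%nat)
  = rsum 4 (fun a => omegaz a z (zpart (V a))) - Hfun eps mu0 z.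
Proof.
  intros HV. unfold Theta, wedge13, dxt, dV.
  cbn [detn rsum Nat.ltb Nat.leb].
  repeat match goal with |- context [V ?b ?n] => rewrite (HV b n) by lia end.
  unfold ebasis. cbn [Nat.eqb]. ring.
Qed.

Lemma pd_single zf x a j : pderiv (fun y => zf y j) x a = jet zf x a j.
Proof. reflexivity. Qed.

Lemma exd_zf (zf : (nat -> R) -> nat -> R) x a j :
  (forall x a j, (a < 4)%nat -> (j < 15)%nat -> ex_derive (fun t => zf (upd x a t) j) (x a)) ->
  (a < 4)%nat -> (j < 15)%nat -> is_derive (fun t => zf (upd x a t) j) (x a) (jet zf x a j).
Proof. intros Hz Ha Hj. apply Derive_correct. apply Hz; auto. Qed.

Lemma pd_prod (zf : (nat -> R) -> nat -> R) x a j k :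
  (forall x a j, (a < 4)%nat -> (j < 15)%nat -> ex_derive (fun t => zf (upd x a t) j) (x a)) ->
  (a < 4)%nat -> (j < 15)%nat -> (k < 15)%nat ->
  pderiv (fun y => zf y j * zf y k) x a = jet zf x a j * zf x k + zf x j * jet zf x a k.
Proof. intros Hz Ha Hj Hk. unfold pderiv. apply is_derive_unique.
  pose proof (isd_mult _ _ _ _ _ (exd_zf zf x a j Hz Ha Hj) (exd_zf zf x a k Hz Ha Hk)) as H.
  cbv beta in H. rewrite upd_same in H. exact H. Qed.

Lemma pd_cross (zf : (nat -> R) -> nat -> R) x a j k l m :
  (forall x a j, (a < 4)%nat -> (j < 15)%nat -> ex_derive (fun t => zf (upd x a t) j) (x a)) ->
  (a < 4)%nat -> (j < 15)%nat -> (k < 15)%nat -> (l < 15)%nat -> (m < 15)%nat ->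
  pderiv (fun y => zf y j * zf y k - zf y l * zf y m) x a
  = (jet zf x a j * zf x k + zf x j * jet zf x a k) - (jet zf x a l * zf x m + zf x l * jet zf x a m).
Proof. intros Hz Ha Hj Hk Hl Hm. unfold pderiv. apply is_derive_unique.
  pose proof (isd_minus _ _ _ _ _
    (isd_mult _ _ _ _ _ (exd_zf zf x a j Hz Ha Hj) (exd_zf zf x a k Hz Ha Hk))
    (isd_mult _ _ _ _ _ (exd_zf zf x a l Hz Ha Hl) (exd_zf zf x a m Hz Ha Hm))) as H.
  cbv beta in H. rewrite upd_same in H. exact H. Qed.

Lemma pull_Lden eps mu0 zf x :
  pullTheta eps mu0 zf x = rsum 4 (fun a => omegaz a (zf x) (jet zf x a)) - Hfun eps mu0 (zf x).
Proof.
  unfold pullTheta. rewrite (Theta_eval eps mu0 (zf x) (dpsi zf x)).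
  2:{ intros b n Hb Hn. unfold dpsi. apply Nat.ltb_lt in Hn. rewrite Hn. reflexivity. }
  reflexivity.
Qed.

Lemma Lden_omega eps mu0 z p :
  Lden eps mu0 z p = rsum 4 (fun a => omegaz a z (p a)) - Hfun eps mu0 z.
Proof. unfold Lden. f_equal. apply rsum_ext. intros a Ha. symmetry. apply omega_lin; auto. Qed.

Lemma Lagr_eq (eps : R -> R -> R) (mu0 : R) (zf : (nat -> R) -> nat -> R) (x : nat -> R) :
  (forall x a j, (a < 4)%nat -> (j < 15)%nat -> ex_derive (fun t => zf (upd x a t) j) (x a)) ->
  rsum 4 (fun a => omegaz a (zf x) (jet zf x a)) - Hfun eps mu0 (zf x) = Lagr eps mu0 zf x.
Proof.
  intros Hz. unfold Lagr, sum3, curl, crossF. cbv beta zeta.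
  unfold iu, iB, iG, irho, iS, imu, ilam, ibeta, iphi. cbn [Nat.sub Nat.add].
  repeat match goal with |- context [pderiv (fun y => zf y ?j * zf y ?k - zf y ?l * zf y ?m) x ?a] =>
    rewrite (pd_cross zf x a j k l m Hz) by lia end.
  repeat match goal with |- context [pderiv (fun y => zf y ?j * zf y ?k) x ?a] =>
    rewrite (pd_prod zf x a j k Hz) by lia end.
  rewrite !pd_single.
  unfold Hfun, sum3, iu, iB, iG, irho, iS, imu, ilam, ibeta, iphi.
  cbn [rsum omegaz Nat.leb Nat.sub Nat.add].
  unfold sum3, iu, iB, iG, irho, iS, imu, ilam, ibeta, iphi. cbn [Nat.sub Nat.add]. ring.
Qed.

Lemma part1 (eps : R -> R -> R) (mu0 : R) (zf : (nat -> R) -> nat -> R) (x : nat -> R) :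
  (forall x a j, (a < 4)%nat -> (j < 15)%nat -> ex_derive (fun t => zf (upd x a t) j) (x a)) ->
  pullTheta eps mu0 zf x = Lden eps mu0 (zf x) (jet zf x)
  /\ pullTheta eps mu0 zf x = Lagr eps mu0 zf x.
Proof. intros Hz. rewrite pull_Lden, Lden_omega. split; [reflexivity| apply Lagr_eq; auto]. Qed.

Theorem proposition1 (eps : R -> R -> R) (mu0 : R) (zf : (nat -> R) -> nat -> R) :
  0 < mu0 ->
  (forall r s, ex_derive (fun t => eps t s) r /\ ex_derive (fun t => eps r t) s) ->
  (forall x a j, (a < 4)%nat -> (j < 15)%nat ->
     ex_derive (fun t => zf (upd x a t) j) (x a)) ->
  (forall x, pullTheta eps mu0 zf x = Lden eps mu0 (zf x) (jet zf x)
             /\ pullTheta eps mu0 zf x = Lagr eps mu0 zf x)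
  /\
  (forall x i, (i < 15)%nat ->
     EL eps mu0 zf i x
     = rsum 4 (fun a => rsum 15 (fun j => Kfun a i j (zf x) * jet zf x a j))
       - pderiv (Hfun eps mu0) (zf x) i)
  /\
  (forall x,
     (forall i, (i < 15)%nat -> EL eps mu0 zf i x = 0) <->
     (forall i, (i < 15)%nat ->
        rsum 4 (fun a => rsum 15 (fun j => Kfun a i j (zf x) * jet zf x a j))
        = pderiv (Hfun eps mu0) (zf x) i)).
Proof.
  intros Hmu He Hz. split; [|split].
  - intros x. apply part1; auto.
  - intros x i Hi. apply EL_formula; auto.
  - intros x. split; intros H i Hi.
    + specialize (H i Hi). rewrite EL_formula in H by auto. lra.
    + rewrite EL_formula by auto. rewrite (H i Hi). ring.
Qed.
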